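(* Let $(\Gamma,\psi)$ be an $H$-asymptotic couple with asymptotic integration, and let $\Psi=\psi(\Gamma\setminus\{0\})$. Then the sets $\Psi$ and $\Psi^{\downarrow}$ are jammed.
   Context: An asymptotic couple is a pair $(\Gamma,\psi)$ with $\Gamma$ an ordered abelian group and $\psi:\Gamma\setminus\{0\}\to\Gamma$ such that for all nonzero $\alpha,\beta$: $\alpha+\beta\ne0\Rightarrow\psi(\alpha+\beta)\ge\min(\psi(\alpha),\psi(\beta))$; $\psi(k\alpha)=\psi(\alpha)$ for $k\in\mathbb{Z}\setminus\{0\}$; $\alpha>0\Rightarrow\alpha+\psi(\alpha)>\psi(\beta)$. $H$-asymptotic: $0<\alpha\le\beta\Rightarrow\psi(\alpha)\ge\psi(\beta)$. Asymptotic integration: every $\alpha\in\Gamma$ equals $\gamma+\psi(\gamma)$ for some $\gamma\ne0$. $\Psi^{\downarrow}=\{\delta\in\Gamma:\delta\le\sigma\text{ for some }\sigma\in\Psi\}$. A set $S\subseteq\Gamma$ is jammed if $S\ne\emptyset$, $S$ has no greatest element, and for every convex subgroup $\Delta\ne\{0\}$ of $\Gamma$ there is $\gamma_0\in S$ such that $\gamma_1-\gamma_0\in\Delta$ for every $\gamma_1\in S$ with $\gamma_1>\gamma_0$. *)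

(* Defs.v *)
From mathcomp Require Import all_boot all_algebra.
Set Implicit Arguments. Unset Strict Implicit. Unset Printing Implicit Defensive.
Import GRing.Theory.
Local Open Scope ring_scope.

Definition ordered_abelian_group (G : zmodType) (lt : G -> G -> Prop) : Prop :=
  (forall x, ~ lt x x) /\
  (forall x y z, lt x y -> lt y z -> lt x z) /\
  (forall x y, lt x y \/ x = y \/ lt y x) /\
  (forall x y z, lt x y -> lt (x + z) (y + z)).

Definition le_of (G : zmodType) (lt : G -> G -> Prop) (x y : G) : Prop :=
  lt x y \/ x = y.

(* (G, psi) is an asymptotic couple; psi : G -> G is total but only its
   values on G \ {0} are constrained / used. *)
Definition asymptotic_couple (G : zmodType) (lt : G -> G -> Prop)
  (psi : G -> G) : Prop :=
  ordered_abelian_group lt /\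
  (forall a b : G, a <> 0 -> b <> 0 -> a + b <> 0 ->
     le_of lt (psi a) (psi (a + b)) \/ le_of lt (psi b) (psi (a + b))) /\
  (forall (a : G) (k : int), a <> 0 -> k <> 0 -> psi (a *~ k) = psi a) /\
  (forall a b : G, lt 0 a -> b <> 0 -> lt (psi b) (a + psi a)).

Definition H_asymptotic (G : zmodType) (lt : G -> G -> Prop) (psi : G -> G)
  : Prop :=
  forall a b : G, lt 0 a -> le_of lt a b -> le_of lt (psi b) (psi a).

Definition asymptotic_integration (G : zmodType) (psi : G -> G) : Prop :=
  forall a : G, exists g : G, g <> 0 /\ a = g + psi g.

Definition PsiSet (G : zmodType) (psi : G -> G) (x : G) : Prop :=
  exists g : G, g <> 0 /\ x = psi g.

Definition downward_closure (G : zmodType) (lt : G -> G -> Prop)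
  (S : G -> Prop) (d : G) : Prop :=
  exists s, S s /\ le_of lt d s.

Definition convex_subgroup (G : zmodType) (lt : G -> G -> Prop)
  (D : G -> Prop) : Prop :=
  D 0 /\ (forall x y, D x -> D y -> D (x - y)) /\
  (forall x y z, D x -> D z -> le_of lt x y -> le_of lt y z -> D y).

Definition jammed (G : zmodType) (lt : G -> G -> Prop) (S : G -> Prop) : Prop :=
  (exists s, S s) /\
  (~ exists m, S m /\ forall s, S s -> le_of lt s m) /\
  (forall D : G -> Prop, convex_subgroup lt D -> (exists x, D x /\ x <> 0) ->
     exists g0, S g0 /\ forall g1, S g1 -> lt g0 g1 -> D (g1 - g0)).

(* Main.v *)
Require Import Defs.
From mathcomp Require Import all_boot all_algebra.
Import GRing.Theory.
Local Open Scope ring_scope.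

Set Implicit Arguments. Unset Strict Implicit.
Section S.
Variables (G : zmodType) (lt : G -> G -> Prop).
Hypothesis OAG : ordered_abelian_group lt.

Lemma irr x : ~ lt x x. Proof. by case: OAG => h _; apply: h. Qed.
Lemma tr x y z : lt x y -> lt y z -> lt x z. Proof. by case: OAG => _ [h _]; apply: h. Qed.
Lemma tri x y : lt x y \/ x = y \/ lt y x. Proof. by case: OAG => _ [_ [h _]]; apply: h. Qed.
Lemma addc x y z : lt x y -> lt (x + z) (y + z). Proof. by case: OAG => _ [_ [_ h]]; apply: h. Qed.

Lemma ltE x y x' y' : lt x y -> x' = x -> y' = y -> lt x' y'.
Proof. by move=> h -> ->. Qed.

Lemma le_lt x y z : le_of lt x y -> lt y z -> lt x z.
Proof. by case=> [h|->] //; apply: tr. Qed.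
Lemma lt_le x y z : lt x y -> le_of lt y z -> lt x z.
Proof. by move=> h [h'|<-] //; apply: tr h h'. Qed.

Lemma sub_pos x y : lt x y -> lt 0 (y - x).
Proof. move=> h; apply: (ltE (addc (-x) h)); by rewrite ?subrr. Qed.
Lemma pos_sub x y : lt 0 (y - x) -> lt x y.
Proof. move=> h; apply: (ltE (addc x h)); by rewrite ?add0r ?subrK. Qed.
Lemma neg_pos x : lt x 0 -> lt 0 (- x).
Proof. by move=> h; apply: (ltE (sub_pos h)); rewrite ?sub0r. Qed.
Lemma lt_subr x c : lt 0 c -> lt (x - c) x.
Proof. move=> h; apply: (ltE (addc (x - c) h)); by rewrite ?add0r // addrC subrK. Qed.
Lemma lt_add_neg x c : lt c 0 -> lt (c + x) x.
Proof. move=> h; apply: (ltE (addc x h)); by rewrite ?add0r. Qed.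
End S.

Lemma key (G : zmodType) (lt : G -> G -> Prop) (psi : G -> G) :
  asymptotic_couple lt psi -> H_asymptotic lt psi ->
  forall d g1, lt 0 d -> g1 <> 0 -> lt (psi d) (psi g1) ->
  lt (psi g1 - psi d) d.
Proof.
move=> [OAG [Hsum [Hk Hax]]] HH d g1 d0 g10 hlt.
have [c [c0 pc]] : exists c, lt 0 c /\ psi c = psi g1.
  case: (tri OAG 0 g1) => [h|[h|h]]; first by exists g1.
    by case: g10.
  exists (- g1); split; first exact: neg_pos.
  by rewrite -mulrN1z Hk.
rewrite -pc in hlt *.
have cd : lt c d.
  case: (tri OAG c d) => [//|h].
  have : le_of lt (psi c) (psi d) by apply: HH => //; case: h => [->|h]; [right|left].
  by move=> /(le_lt OAG) /(_ hlt) /(irr OAG).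
have a0 := sub_pos OAG cd.
have cn : c <> 0 by move=> e; move: c0; rewrite e => /(irr OAG).
have an : d - c <> 0 by move=> e; move: a0; rewrite e => /(irr OAG).
have dn : c + (d - c) <> 0.
  by rewrite addrC subrK => e; move: d0; rewrite e => /(irr OAG).
have psa : le_of lt (psi (d - c)) (psi d).
  case: (Hsum _ _ cn an dn); rewrite [c + _]addrC subrK // => h.
  by case: (irr OAG (le_lt OAG h hlt)).
have h1 := Hax _ _ a0 cn.
have h2 : lt (psi c) (d - c + psi d).
  apply: (lt_le OAG h1).
  case: psa => [h|->]; last by right.
  by left; rewrite addrC [d - c + psi d]addrC; exact: (addc OAG (d - c) h).
have h3 : lt (psi c - psi d) (d - c).
  by apply: (ltE (addc OAG (- psi d) h2)); rewrite // addrK.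
exact: (tr OAG h3 (lt_subr OAG _ c0)).
Qed.

Theorem lemma3p11 (G : zmodType) (lt : G -> G -> Prop) (psi : G -> G) :
  asymptotic_couple lt psi -> H_asymptotic lt psi ->
  asymptotic_integration psi ->
  jammed lt (PsiSet psi) /\ jammed lt (downward_closure lt (PsiSet psi)).
Proof.
move=> AC HH AI.
have K := key AC HH.
case: AC => [OAG [Hsum [Hk Hax]]].
have ne : exists s, PsiSet psi s.
  by case: (AI 0) => g [g0 _]; exists (psi g), g.
have nomax : forall m, PsiSet psi m -> exists s, PsiSet psi s /\ lt m s.
  move=> m [b [b0 ->]].
  have [g [g0 e]] := AI (psi b).
  case: (tri OAG 0 g) => [h|[h|h]].
  - by have := Hax _ _ h b0; rewrite -e => /(irr OAG).
  - by case: g0.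
  - exists (psi g); split; first by exists g.
    rewrite e; exact: lt_add_neg.
have pos : forall D : G -> Prop, convex_subgroup lt D -> (exists x, D x /\ x <> 0) ->
    exists d, D d /\ lt 0 d.
  move=> D [D0 [Dsub _]] [x [Dx x0]].
  case: (tri OAG 0 x) => [h|[h|h]]; first by exists x.
    by case: x0.
  exists (- x); split; last exact: neg_pos.
  by rewrite -sub0r; apply: Dsub.
have inD : forall D : G -> Prop, convex_subgroup lt D -> forall d y,
    D d -> lt 0 y -> lt y d -> D y.
  move=> D [D0 [_ Dc]] d y Dd y0 yd.
  by apply: (Dc 0 y d) => //; left.
split.
- split; first exact: ne.
  split.
    move=> [m [Pm Hm]]; have [s [Ps ms]] := nomax m Pm.
    by case: (irr OAG (lt_le OAG ms (Hm s Ps))).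
  move=> D CD ND; have [d [Dd d0]] := pos D CD ND.
  exists (psi d); split.
    by exists d; split => // e; move: d0; rewrite e => /(irr OAG).
  move=> g1 [b [b0 ->]] h.
  exact: (inD D CD d _ Dd (sub_pos OAG h) (K d b d0 b0 h)).
- split.
    case: ne => s Ps; exists s; exists s; split; [exact: Ps | by right].
  split.
    move=> [m [[s [Ps ms]] Hm]]; have [s' [Ps' ss']] := nomax s Ps.
    have hs' : le_of lt s' m by apply: Hm; exists s'; split; [exact: Ps' | right].
    exact: (irr OAG (le_lt OAG hs' (le_lt OAG ms ss'))).
  move=> D CD ND; have [d [Dd d0]] := pos D CD ND.
  have dn : d <> 0 by move=> e; move: d0; rewrite e => /(irr OAG).
  exists (psi d); split.
    by exists (psi d); split; [exists d | right].
  move=> g1 [s [[b [b0 ->]] gs]] h.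
  have hb' : lt (psi d) (psi b) := lt_le OAG h gs.
  apply: (inD D CD d _ Dd (sub_pos OAG h)).
  apply: (le_lt OAG _ (K d b d0 b0 hb')).
  case: gs => [h'|->]; last by right.
  by left; exact: (addc OAG (- psi d) h').
Qed.
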